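(* Let $m\geq 2$ and $n\geq 3$ be integers and let $M$ be the adjacency matrix of the oriented Dutch windmill graph $D^m_n$. Then the Drazin inverse of $M$ is $$M^D=\frac{1}{m}M^{n-1}.$$ Moreover, the only nonzero entries of $M^D$ are equal to $\frac1m$, and they occur precisely at the positions $(i,j)$ satisfying one of the following: (1) $i=1$ and $j=(k-1)(n-1)+n$ for some $k\in\{1,\ldots,m\}$; (2) $i=(k-1)(n-1)+2$ and $j=1$ for some $k\in\{1,\ldots,m\}$; (3) $i=(k-1)(n-1)+\ell$ and $j=i-1$ for some $k\in\{1,\ldots,m\}$ and $\ell\in\{3,\ldots,n\}$; (4) $i=(k-1)(n-1)+\ell$ and $j=(r-1)(n-1)+(\ell-1)$ for some distinct $k,r\in\{1,\ldots,m\}$ and some $\ell\in\{3,\ldots,n\}$. These positions correspond exactly to the ordered pairs of vertices $(i,j)$ such that there is a walk of length $n-1$ from $i$ to $j$ in $D^m_n$.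
   Context: For integers $m\geq 1$, $n\geq 3$, the oriented Dutch windmill graph $D^m_n$ is the directed graph with vertex set $V=\{1,2,\ldots,m(n-1)+1\}$ whose directed edges $(a,b)$ are exactly: $(1,(k-1)(n-1)+2)$ for $k\in\{1,\ldots,m\}$; $((k-1)(n-1)+i,(k-1)(n-1)+i+1)$ for $k\in\{1,\ldots,m\}$ and $i\in\{2,\ldots,n-1\}$; and $((k-1)(n-1)+n,1)$ for $k\in\{1,\ldots,m\}$. (Thus it consists of $m$ directed $n$-cycles sharing the vertex $1$.) Its adjacency matrix $M=(a_{ij})$ is the real $(m(n-1)+1)\times(m(n-1)+1)$ matrix with $a_{ij}=1$ if $(i,j)$ is an edge and $a_{ij}=0$ otherwise. A walk is a sequence of vertices $\langle v_1,\ldots,v_r\rangle$ in which each $(v_t,v_{t+1})$ is an edge; its length is $r-1$. The Drazin inverse of a square matrix $A$ is the unique matrix $X$ with $A^{k+1}X=A^k$, $XAX=X$, $AX=XA$ for some nonnegative integer $k$; the least such $k$ is the Drazin index $\operatorname{ind}(A)$. *)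

(* Defs.v *)
From mathcomp Require Import all_boot all_order all_algebra.
Set Implicit Arguments. Unset Strict Implicit. Unset Printing Implicit Defensive.
Import Order.TTheory GRing.Theory Num.Theory.
Local Open Scope ring_scope.

(* Number of vertices of D^m_n : m(n-1)+1.  Vertex labels are the naturals
   1 .. m(n-1)+1; the matrix index i : 'I_(m*(n-1)).+1 stands for vertex i+1. *)

Definition dw_edge (m n a b : nat) : bool :=
  [|| [exists k : 'I_m.+1, (1 <= k)%N && (a == 1)%N
                             && (b == (k - 1) * (n - 1) + 2)%N],
      [exists k : 'I_m.+1, exists i : 'I_n,
          [&& (1 <= k)%N, (2 <= i)%N,
              (a == (k - 1) * (n - 1) + i)%N
            & (b == (k - 1) * (n - 1) + i + 1)%N]]
    | [exists k : 'I_m.+1, (1 <= k)%N && (a == (k - 1) * (n - 1) + n)%N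
                             && (b == 1)%N]].

Definition dw_adj (R : nzRingType) (m n : nat) : 'M[R]_((m * (n - 1)).+1) :=
  \matrix_(i, j) (dw_edge m n i.+1 j.+1)%:R.

Definition dw_walk (m n L a b : nat) : Prop :=
  exists s : seq nat,
    [/\ (1 <= a <= m * (n - 1) + 1)%N, size s = L,
        path (dw_edge m n) a s & last a s = b].

Definition is_drazin_inverse (T : nzRingType) (A X : T) : Prop :=
  exists k : nat, [/\ A ^+ k.+1 * X = A ^+ k, X * A * X = X & A * X = X * A].

Definition dw_pos (m n i j : nat) : Prop :=
  (exists k, [/\ (1 <= k <= m)%N, i = 1%N & j = ((k - 1) * (n - 1) + n)%N]) \/
  (exists k, [/\ (1 <= k <= m)%N, i = ((k - 1) * (n - 1) + 2)%N & j = 1%N]) \/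
  (exists k l, [/\ (1 <= k <= m)%N, (3 <= l <= n)%N,
                   i = ((k - 1) * (n - 1) + l)%N & j = (i - 1)%N]) \/
  (exists k r l, [/\ (1 <= k <= m)%N && (1 <= r <= m)%N, k <> r, (3 <= l <= n)%N,
                     i = ((k - 1) * (n - 1) + l)%N
                   & j = ((r - 1) * (n - 1) + (l - 1))%N]).

(* Main.v *)
Require Import Defs.
From mathcomp Require Import all_boot all_order all_algebra.
From mathcomp Require Import zify.
Import Order.TTheory GRing.Theory Num.Theory.
Set Implicit Arguments. Unset Strict Implicit. Unset Printing Implicit Defensive.

Definition rho (n x : nat) : nat := if x <= 1 then 0 else (x - 2) %% (n - 1) + 1.
Definition kk (n x : nat) : nat := (x - 2) %/ (n - 1).
Definition inr (m n x : nat) : bool := (1 <= x <= m * (n - 1) + 1).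

Lemma rho_rep n x : 3 <= n -> 2 <= x ->
  x = kk n x * (n - 1) + rho n x + 1 /\ 1 <= rho n x <= n - 1.
Proof.
move=> hn hx; rewrite /rho /kk.
have -> : (x <= 1) = false by lia.
have hd : 0 < n - 1 by lia.
have := divn_eq (x - 2) (n - 1); have := ltn_pmod (x - 2) hd. lia.
Qed.

Lemma rho_uniq n x k r : 3 <= n -> x = k * (n - 1) + r + 1 -> 1 <= r <= n - 1 ->
  kk n x = k /\ rho n x = r.
Proof.
move=> hn -> hr; rewrite /rho /kk.
have hd : 0 < n - 1 by lia.
have -> : (k * (n - 1) + r + 1 <= 1) = false by lia.
have -> : k * (n - 1) + r + 1 - 2 = k * (n - 1) + (r - 1) by lia.
rewrite divnMDl // modnMDl divn_small ?modn_small; lia.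
Qed.

Lemma rho1 n : rho n 1 = 0. Proof. by []. Qed.

Lemma inr_kk m n x : 3 <= n -> 2 <= x -> inr m n x = (kk n x < m).
Proof.
move=> hn hx; rewrite /inr.
have [e hr] := rho_rep hn hx.
set d := n - 1 in e hr *. set K := kk n x in e hr *.
apply/idP/idP.
- move=> /andP[_ h]. rewrite ltnNge; apply/negP => hK.
  have : m * d <= K * d by rewrite leq_mul2r hK orbT.
  lia.
- move=> hK. have : K.+1 * d <= m * d by rewrite leq_mul2r hK orbT.
  rewrite mulSn. lia.
Qed.

Lemma vtx_eq n x y : 3 <= n -> 2 <= x -> 2 <= y -> kk n x = kk n y -> rho n x = rho n y -> x = y.
Proof.
move=> hn hx hy e1 e2.
have [ex _] := rho_rep hn hx. have [ey _] := rho_rep hn hy.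
by rewrite ex ey e1 e2.
Qed.

Ltac bsplit := repeat (apply/andP; split); try apply/eqP.

Definition edgeC (m n a b : nat) : bool :=
  inr m n a && inr m n b &&
  [|| (a == 1) && (2 <= b) && (rho n b == 1),
      (2 <= a) && (rho n a < n - 1) && (b == a.+1)
    | (2 <= a) && (rho n a == n - 1) && (b == 1)].

Lemma edgeE m n a b : 3 <= n -> dw_edge m n a b = edgeC m n a b.
Proof.
move=> hn; rewrite /dw_edge /edgeC.
apply/idP/idP.
- case/or3P.
  + case/existsP=> k /andP[/andP[hk /eqP ea] /eqP eb].
    have [e1 e2] := rho_uniq (x := b) (k := k - 1) (r := 1) hn ltac:(nia) ltac:(nia).
    have hb : 2 <= b by nia.
    rewrite (inr_kk m hn hb) e1 e2 ea /inr.
    have := ltn_ord k. nia.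
  + case/existsP=> k /existsP[i /and4P[hk hi /eqP ea /eqP eb]].
    have hik := ltn_ord i; have hkk := ltn_ord k.
    have [e1 e2] := rho_uniq (x := a) (k := k - 1) (r := (i - 1)) hn ltac:(nia) ltac:(nia).
    have [f1 f2] := rho_uniq (x := b) (k := k - 1) (r := i) hn ltac:(nia) ltac:(nia).
    have ha : 2 <= a by nia. have hb : 2 <= b by nia.
    rewrite (inr_kk m hn ha) (inr_kk m hn hb) e1 e2 f1. nia.
  + case/existsP=> k /andP[/andP[hk /eqP ea] /eqP eb].
    have hkk := ltn_ord k.
    have [e1 e2] := rho_uniq (x := a) (k := k - 1) (r := (n - 1)) hn ltac:(nia) ltac:(nia).
    have ha : 2 <= a by nia.
    rewrite (inr_kk m hn ha) e1 e2 eb /inr. nia.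
- case/andP=> /andP[ia ib]; case/or3P.
  + move=> /andP[/andP[/eqP ea hb] /eqP rb].
    have := ib; rewrite (inr_kk m hn hb) => kb.
    have [e hr] := rho_rep hn hb.
    apply/orP; left; apply/existsP; exists (Ordinal (n:=m.+1) (m:=kk n b + 1) ltac:(nia)).
    rewrite /=; bsplit; nia.
  + move=> /andP[/andP[ha ra] /eqP eb].
    have := ia; rewrite (inr_kk m hn ha) => ka.
    have [e hr] := rho_rep hn ha.
    apply/orP; right; apply/orP; left; apply/existsP.
    exists (Ordinal (n:=m.+1) (m:=kk n a + 1) ltac:(nia)).
    apply/existsP; exists (Ordinal (n:=n) (m:=rho n a + 1) ltac:(nia)).
    rewrite /=; apply/and4P; split; try apply/eqP; nia.
  + move=> /andP[/andP[ha /eqP ra] /eqP eb].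
    have := ia; rewrite (inr_kk m hn ha) => ka.
    have [e hr] := rho_rep hn ha.
    apply/orP; right; apply/orP; right; apply/existsP.
    exists (Ordinal (n:=m.+1) (m:=kk n a + 1) ltac:(nia)).
    rewrite /=; bsplit; nia.
Qed.

Ltac dest f := case: f => [[? ?]|[? ? ? ?]].

Definition Et (n t a v : nat) : bool :=
  if rho n a + t <= n - 1 then (rho n v == rho n a + t) && ((a == 1) || (kk n a == kk n v))
  else (rho n v + n == rho n a + t).

Lemma vfacts m n x : 3 <= n -> inr m n x ->
  (x = 1 /\ rho n x = 0) \/
  [/\ 2 <= x, x = kk n x * (n - 1) + rho n x + 1, 1 <= rho n x <= n - 1 & kk n x < m].
Proof.
move=> hn hx; case: (ltnP x 2) => h.
- left; have e : x = 1 by move: hx; rewrite /inr; lia.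
  by rewrite e.
- right; have [e hr] := rho_rep hn h. split => //.
  by rewrite -(inr_kk m hn h).
Qed.

Lemma succ_rho n v : 3 <= n -> 2 <= v -> rho n v < n - 1 ->
  kk n v.+1 = kk n v /\ rho n v.+1 = (rho n v).+1.
Proof.
move=> hn hv hr; have [e hr'] := rho_rep hn hv.
apply: rho_uniq => //; try nia; try lia.
Qed.

Lemma inr1 m n : inr m n 1. Proof. by rewrite /inr; nia. Qed.

Ltac crush hE fa fv fw :=
  move: hE; rewrite /Et; repeat (case: ifP => ?); move=> *; dest fa; dest fv; dest fw; nia.

Lemma step_back m n t a v w : 3 <= n -> t < n - 1 -> inr m n a -> inr m n v -> inr m n w ->
  Et n t a v -> edgeC m n v w -> Et n t.+1 a w.
Proof.
move=> hn ht ia iv iw hE; rewrite /edgeC iv iw /=.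
have fa := vfacts hn ia; have fv := vfacts hn iv; have fw := vfacts hn iw.
case/or3P.
- move=> /andP[/andP[/eqP ev hw] /eqP rw]; subst v. crush hE fa fv fw.
- move=> /andP[/andP[hv rv] /eqP ew]; subst w.
  have [k1 r1] := succ_rho hn hv rv. rewrite /Et k1 r1. crush hE fa fv fw.
- move=> /andP[/andP[hv /eqP rv] /eqP ew]; subst w. crush hE fa fv fw.
Qed.

Lemma inr_ge2 m n x : 3 <= n -> 2 <= x -> kk n x < m -> inr m n x.
Proof. by move=> hn hx hk; rewrite (inr_kk m hn hx). Qed.

Lemma step_fwd m n t a w : 3 <= n -> t < n - 1 -> inr m n a -> inr m n w ->
  Et n t.+1 a w -> exists v, [/\ inr m n v, Et n t a v, edgeC m n v w &
     forall v', inr m n v' -> Et n t a v' -> edgeC m n v' w -> v' = v].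
Proof.
move=> hn ht ia iw hE.
have fa := vfacts hn ia; have fw := vfacts hn iw.
case: (fw) => [[ew rw]|[hw ew rw kw]].
-
  subst w.
  have [ha hat] : 2 <= a /\ rho n a + t = n - 1.
    move: hE; rewrite /Et rho1; repeat (case: ifP => ?); move=> *; dest fa; nia.
  have fa' := rho_rep hn ha.
  pose v0 := kk n a * (n - 1) + (n - 1) + 1.
  have [k0 r0] := rho_uniq (x := v0) (k := kk n a) (r := n - 1) hn erefl ltac:(lia).
  have h0 : 2 <= v0 by rewrite /v0; nia.
  have i0 : inr m n v0.
    apply: inr_ge2 => //. rewrite k0. by dest fa; nia.
  exists v0; split => //.
  + rewrite /Et k0 r0 hat leqnn /=. apply/andP; split=> //. lia.
  + rewrite /edgeC i0 inr1 /= r0 h0 eqxx /=. by rewrite !orbT.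
  + move=> v' iv' hE' /=; rewrite /edgeC iv' inr1 /=.
    have fv := vfacts hn iv'.
    case/or3P.
    * by move=> /andP[/andP[_ /=]].
    * move=> /andP[/andP[hv _] /eqP e]; lia.
    * move=> /andP[/andP[hv /eqP rv] _].
      apply: (vtx_eq hn) => //; last by rewrite r0.
      rewrite k0. move: hE'; rewrite /Et rv; repeat (case: ifP => ?); move=> *; dest fa; dest fv; nia.
- case: (leqP (rho n w) 1) => hr.
  +
    exists 1; split.
    * exact: inr1.
    * move: hE; rewrite /Et rho1; repeat (case: ifP => ?); move=> *; dest fa; nia.
    * rewrite /edgeC inr1 iw /= hw. apply/orP; left. apply/eqP; lia.
    * move=> v' iv' hE'; rewrite /edgeC iv' iw /=.
      have fv := vfacts hn iv'.
      case/or3P.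
      -- by move=> /andP[/andP[/eqP -> _] _].
      -- move=> /andP[/andP[hv rv] /eqP e]; subst w.
         have [k1 r1] := succ_rho hn hv rv. have [_ hr2] := rho_rep hn hv. lia.
      -- move=> /andP[/andP[_ _] /eqP e]; lia.
  +
    pose v0 := w.-1.
    have [k0 r0] := rho_uniq (x := v0) (k := kk n w) (r := (rho n w).-1) hn ltac:(rewrite /v0; nia) ltac:(lia).
    have h0 : 2 <= v0 by rewrite /v0; nia.
    have i0 : inr m n v0 by apply: inr_ge2 => //; rewrite k0.
    exists v0; split => //.
    * move: hE; rewrite /Et k0 r0; repeat (case: ifP => ?); move=> *; dest fa; nia.
    * rewrite /edgeC i0 iw /= h0 r0. apply/orP; right; apply/orP; left.
      apply/andP; split; [apply/andP; split|]; try apply/eqP; rewrite /v0; lia.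
    * move=> v' iv' hE'; rewrite /edgeC iv' iw /=.
      case/or3P.
      -- move=> /andP[/andP[_ _] /eqP e]; lia.
      -- move=> /andP[/andP[hv rv] /eqP e]; subst w. by rewrite /v0.
      -- move=> /andP[/andP[_ _] /eqP e]; lia.
Qed.

Lemma Et0 m n a v : 3 <= n -> inr m n a -> inr m n v -> Et n 0 a v = (a == v).
Proof.
move=> hn ia iv; have fa := vfacts hn ia; have fv := vfacts hn iv.
apply/idP/eqP.
- rewrite /Et; repeat (case: ifP => ?); move=> *; dest fa; dest fv; try nia;
  apply: (vtx_eq hn) => //; lia.
- move=> <-. rewrite /Et addn0. dest fa; rewrite ifT; try nia; rewrite eqxx /=; lia.
Qed.

Definition Ed n a b : bool := if a == 1 then rho n b == n - 1 else rho n b + 1 == rho n a.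

Lemma EtD m n a v : 3 <= n -> inr m n a -> inr m n v -> Et n (n - 1) a v = Ed n a v.
Proof.
move=> hn ia iv; have fa := vfacts hn ia; have fv := vfacts hn iv.
rewrite /Et /Ed; repeat (case: ifP => ?); dest fa; dest fv; nia.
Qed.

Lemma walkE m n t a b : 3 <= n -> t <= n - 1 -> inr m n a -> inr m n b ->
  (exists s, [/\ size s = t, path (dw_edge m n) a s & last a s = b]) <-> Et n t a b.
Proof.
move=> hn; have ee : dw_edge m n =2 edgeC m n by move=> x y; apply: edgeE.
elim: t b => [|t IH] b ht ia ib.
- rewrite (Et0 hn ia ib); split.
  + by case=> s [/size0nil -> _ /= ->].
  + by move/eqP=> <-; exists [::].
- split.
  + case=> s []; case/lastP: s => [//|s x].
    rewrite size_rcons => -[hs]; rewrite rcons_path last_rcons => /andP[hp he] ex.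
    subst x. rewrite ee in he.
    have iv : inr m n (last a s) by move: he; rewrite /edgeC => /andP[/andP[]].
    have hE : Et n t a (last a s) by apply/(IH _ ltac:(lia) ia iv); exists s.
    exact: (step_back hn _ ia iv ib hE he).
  + move=> hE. have [v [iv hv he _]] := step_fwd (t := t) hn ltac:(lia) ia ib hE.
    have [s [hs hp hl]] := (IH v ltac:(lia) ia iv).2 hv.
    exists (rcons s b); rewrite size_rcons hs rcons_path last_rcons hp hl ee he.
    by [].
Qed.

Lemma posE m n a b : 3 <= n -> inr m n a -> inr m n b -> dw_pos m n a b <-> Ed n a b.
Proof.
move=> hn ia ib; have fa := vfacts hn ia; have fb := vfacts hn ib.
rewrite /dw_pos /Ed; split.
- case=> [[k [hk ea eb]]|[[k [hk ea eb]]|[[k [l [hk hl ea eb]]]|[k [r [l [hkr hkr' hl ea eb]]]]]]].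
  + have [_ e2] := rho_uniq (x := b) (k := k - 1) (r := n - 1) hn ltac:(nia) ltac:(lia).
    by rewrite ea e2 eqxx.
  + have [_ e2] := rho_uniq (x := a) (k := k - 1) (r := 1) hn ltac:(nia) ltac:(lia).
    have -> : (a == 1) = false by nia.
    by rewrite eb e2.
  + have [_ e2] := rho_uniq (x := a) (k := k - 1) (r := l - 1) hn ltac:(nia) ltac:(lia).
    have [_ e3] := rho_uniq (x := b) (k := k - 1) (r := l - 2) hn ltac:(nia) ltac:(lia).
    have -> : (a == 1) = false by nia.
    rewrite e2 e3; lia.
  + have [_ e2] := rho_uniq (x := a) (k := k - 1) (r := l - 1) hn ltac:(nia) ltac:(lia).
    have [_ e3] := rho_uniq (x := b) (k := r - 1) (r := l - 2) hn ltac:(nia) ltac:(lia).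
    have -> : (a == 1) = false by nia.
    rewrite e2 e3; lia.
- case: fa => [[ea ra]|[ha ea ra ka]].
  + rewrite ea eqxx => rb. left. exists (kk n b).+1.
    case: fb => [[eb rb']|[hb eb rb' kb]]; first lia.
    split; lia.
  + have -> : (a == 1) = false by lia.
    move=> /eqP hab.
    case: fb => [[eb rb]|[hb eb rb kb]].
    * right; left; exists (kk n a).+1; split; lia.
    * right; right. case: (eqVneq (kk n a) (kk n b)) => hk.
      -- left; exists (kk n a).+1, (rho n a).+1; split; lia.
      -- right; exists (kk n a).+1, (kk n b).+1, (rho n a).+1; split; try lia.
Qed.

Lemma sum_eqc d c : \sum_(0 <= k < d) (k == c : nat) = (c < d).
Proof.
elim: d => [|d IH]; first by rewrite big_geq.
rewrite big_nat_recr //= IH. case: (ltngtP c d) => h; try lia.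
Qed.

Lemma sum_blocks (F : nat -> nat) m d :
  \sum_(0 <= k < m * d) F k = \sum_(0 <= q < m) \sum_(0 <= r < d) F (q * d + r).
Proof.
elim: m => [|m IH]; first by rewrite mul0n !big_geq.
rewrite big_nat_recr //= -IH mulSn addnC (big_cat_nat _ (n := m * d)) //=; last lia.
congr (_ + _). rewrite -{1}(add0n (m * d)) big_addn addKn.
by apply: eq_bigr => r _; rewrite addnC.
Qed.

Lemma count_rho m n c : 3 <= n -> 1 <= c <= n - 1 ->
  \sum_(k < (m * (n - 1)).+1) (rho n k.+1 == c : nat) = m.
Proof.
move=> hn hc. rewrite big_ord_recl /= rho1.
have -> : (0 == c) = false by lia.
rewrite add0n.
rewrite (eq_bigr (fun k : 'I_(m * (n - 1)) => ((k : nat) %% (n - 1) == c - 1 : nat))); last first.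
  move=> k _. rewrite /rho /bump /=. have -> : (1 + k).+1 - 2 = k by lia. apply/eqP/eqP; lia.
rewrite -(big_mkord xpredT (fun k => (k %% (n - 1) == c - 1 : nat))).
rewrite sum_blocks.
rewrite (eq_bigr (fun _ => 1)); first by rewrite sum_nat_const_nat subn0 muln1.
move=> q _. rewrite (eq_big_nat _ _ (F2 := fun r => (r == c - 1 : nat))).
  rewrite sum_eqc. lia.
move=> r hr. rewrite modnMDl modn_small //; lia.
Qed.

Local Open Scope ring_scope.

Lemma inr_ord m n (i : 'I_(m * (n - 1)).+1) : inr m n i.+1.
Proof. rewrite /inr; have := ltn_ord i; lia. Qed.

Lemma sum_one (R : nzRingType) N (P : pred 'I_N) (F : 'I_N -> R) k0 :
  P k0 -> (forall k, P k -> k = k0) -> \sum_k (P k)%:R * F k = F k0.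
Proof.
move=> h0 hu; rewrite (bigD1 k0) //= h0 mul1r big1 ?addr0 // => k hk.
case: (boolP (P k)) => h; last by rewrite mul0r.
by move: hk; rewrite (hu _ h) eqxx.
Qed.

Lemma sum_zero (R : nzRingType) N (P : pred 'I_N) (F : 'I_N -> R) :
  (forall k, ~~ P k) -> \sum_k (P k)%:R * F k = 0.
Proof. by move=> h; rewrite big1 // => k _; rewrite (negbTE (h k)) mul0r. Qed.

Lemma sum_one1 (R : nzRingType) N (P : pred 'I_N) k0 :
  P k0 -> (forall k, P k -> k = k0) -> \sum_k (P k)%:R = 1 :> R.
Proof.
move=> h0 hu; transitivity (\sum_k (P k)%:R * (1 : R)).
  by apply: eq_bigr => k _; rewrite mulr1.
exact: (sum_one (fun _ => (1 : R)) h0 hu).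
Qed.

Lemma sum_zero1 (R : nzRingType) N (P : pred 'I_N) :
  (forall k, ~~ P k) -> \sum_k (P k)%:R = 0 :> R.
Proof.
move=> h; transitivity (\sum_k (P k)%:R * (1 : R)).
  by apply: eq_bigr => k _; rewrite mulr1.
exact: (sum_zero (fun _ => (1 : R)) h).
Qed.

Lemma sum_count (R : nzRingType) m n c (F : 'I_(m * (n - 1)).+1 -> R) (K : R) :
  (3 <= n)%N -> (1 <= c <= n - 1)%N -> (forall k : 'I_(m * (n - 1)).+1, rho n k.+1 == c -> F k = K) ->
  \sum_(k : 'I_(m * (n - 1)).+1) (rho n k.+1 == c)%:R * F k = m%:R * K.
Proof.
move=> hn hc hF.
rewrite (eq_bigr (fun k : 'I_(m * (n - 1)).+1 => (rho n k.+1 == c)%:R * K)); last first.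
  by move=> k _; case: (boolP (rho n k.+1 == c)) => h; rewrite ?mul0r // hF.
by rewrite -mulr_suml -natr_sum count_rho.
Qed.

Lemma ord_of m n v : inr m n v -> (v.-1 < (m * (n - 1)).+1)%N.
Proof. rewrite /inr; lia. Qed.

Lemma Mpow (R : nzRingType) m n t : (3 <= n)%N -> (t <= n - 1)%N ->
  forall i j : 'I_(m * (n - 1)).+1, (dw_adj R m n ^+ t) i j = (Et n t i.+1 j.+1)%:R.
Proof.
move=> hn; elim: t => [|t IH] ht i j.
- by rewrite expr0 -idmxE mxE (Et0 hn (inr_ord i) (inr_ord j)) eqSS.
- rewrite exprSr -mulmxE mxE.
  have IH2 := IH ltac:(lia).
  under eq_bigr => k _ do rewrite IH2 mxE (edgeE _ _ _ hn).
  under eq_bigr => k _ do rewrite -natrM mulnb.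
  have ia := inr_ord i; have ib := inr_ord j.
  case: (boolP (Et n t.+1 i.+1 j.+1)) => h.
  + have [v [iv hv he hu]] := step_fwd (t := t) hn ltac:(lia) ia ib h.
    pose k0 : 'I_(m * (n - 1)).+1 := Ordinal (ord_of iv).
    have ek : (k0 : nat).+1 = v by rewrite /= prednK //; have := iv; rewrite /inr; lia.
    rewrite (@sum_one1 R _ (fun k : 'I_(m * (n - 1)).+1 => Et n t i.+1 k.+1 && edgeC m n k.+1 j.+1) k0) //=.
      by rewrite ek hv he.
    move=> k /andP[h1 h2]; apply: val_inj => /=.
    have := hu _ (inr_ord k) h1 h2. lia.
  + rewrite (@sum_zero1 R _ (fun k : 'I_(m * (n - 1)).+1 => Et n t i.+1 k.+1 && edgeC m n k.+1 j.+1)) //.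
    move=> k; apply/negP => /andP[h1 h2].
    by move: h; rewrite (step_back hn _ ia (inr_ord k) ib h1 h2) //; lia.
Qed.

Lemma Epow (R : nzRingType) m n : (3 <= n)%N ->
  forall i j : 'I_(m * (n - 1)).+1, (dw_adj R m n ^+ (n - 1)) i j = (Ed n i.+1 j.+1)%:R.
Proof.
move=> hn i j; rewrite (Mpow R hn (leqnn _)) (EtD hn (inr_ord i) (inr_ord j)). by [].
Qed.

Lemma ME (R : nzRingType) m n : (3 <= n)%N ->
  forall i j : 'I_(m * (n - 1)).+1,
  (dw_adj R m n * dw_adj R m n ^+ (n - 1)) i j =
  if i.+1 == 1%N then m%:R * (j.+1 == 1%N)%:R else (rho n j.+1 == rho n i.+1)%:R.
Proof.
move=> hn i j; rewrite -mulmxE mxE.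
under eq_bigr => k _ do rewrite (Epow R hn) mxE (edgeE _ _ _ hn).
have ia := inr_ord i; have ib := inr_ord j.
have fa := vfacts hn ia; have fb := vfacts hn ib.
case: (eqVneq i.+1 1%N) => hi.
- rewrite (eq_bigr (fun k : 'I_(m * (n - 1)).+1 => (rho n k.+1 == 1%N)%:R * (Ed n k.+1 j.+1)%:R)).
    apply: sum_count => //; first lia.
    move=> k /eqP hk. rewrite /Ed. have -> : (k.+1 == 1%N) = false by apply/negP => /eqP e; move: hk; rewrite e rho1.
    congr (_%:R). dest fb; apply/eqP; lia.
  move=> k _; congr (_ * _); congr (_%:R).
  rewrite /edgeC hi inr1 inr_ord /= orbF.
  case: (ltnP 1 k.+1) => h //=.
  have -> : k.+1 = 1%N by lia. by rewrite rho1.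
- have ha : (2 <= i.+1)%N by lia.
  have [ea ra] := rho_rep hn ha.
  case: (ltnP (rho n i.+1) (n - 1)) => hr.
  + have [k1 r1] := succ_rho hn ha hr.
    have i2 : inr m n i.+2 by apply: inr_ge2 => //; rewrite k1; dest fa; lia.
    pose k0 : 'I_(m * (n - 1)).+1 := Ordinal (ord_of i2).
    rewrite (@sum_one R _ (fun k : 'I_(m * (n - 1)).+1 => edgeC m n i.+1 k.+1) _ k0) /=.
    * rewrite /Ed /= r1. congr (_%:R). apply/eqP/eqP; lia.
    * rewrite /edgeC ia i2 /= hr ha eqxx /=. by rewrite orbT.
    * move=> k; rewrite /edgeC ia inr_ord /= (negbTE hi) /=.
      case/orP => [/andP[/andP[_ _] /eqP e]|/andP[/andP[_ /eqP e] _]].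
      -- apply: val_inj => /=; lia.
      -- lia.
  + have hr' : rho n i.+1 = (n - 1)%N by lia.
    pose k0 : 'I_(m * (n - 1)).+1 := ord0.
    rewrite (@sum_one R _ (fun k : 'I_(m * (n - 1)).+1 => edgeC m n i.+1 k.+1) _ k0) /=.
    * rewrite /Ed /= hr'. by [].
    * rewrite /edgeC ia inr1 /= hr' ha eqxx /=. by rewrite !orbT.
    * move=> k; rewrite /edgeC ia inr_ord /= (negbTE hi) /=.
      case/orP => [/andP[/andP[_ h] _]|/andP[_ /eqP e]].
      -- lia.
      -- apply: val_inj => /=; lia.
Qed.

Lemma EME (R : nzRingType) m n : (3 <= n)%N ->
  forall i j : 'I_(m * (n - 1)).+1,
  (dw_adj R m n ^+ (n - 1) * (dw_adj R m n * dw_adj R m n ^+ (n - 1))) i j =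
  m%:R * (dw_adj R m n ^+ (n - 1)) i j.
Proof.
move=> hn i j; rewrite -mulmxE mxE (Epow R hn).
under eq_bigr => k _ do rewrite (Epow R hn) mulmxE (ME R hn).
have ia := inr_ord i; have ib := inr_ord j.
have fa := vfacts hn ia; have fb := vfacts hn ib.
rewrite /Ed.
case: (eqVneq i.+1 1%N) => hi.
- apply: sum_count => //; first lia.
  move=> k /eqP hk. have -> : (k.+1 == 1%N) = false.
    by apply/negP => /eqP e; move: hk; rewrite e rho1; lia.
  by rewrite hk.
- have ha : (2 <= i.+1)%N by lia.
  have [ea ra] := rho_rep hn ha.
  case: (eqVneq (rho n i.+1) 1%N) => hr.
  + rewrite (@sum_one R _ (fun k : 'I_(m * (n - 1)).+1 => rho n k.+1 + 1 == rho n i.+1)%N _ ord0) /=.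
    * rewrite /= hr. congr (_ * _%:R). dest fb; apply/eqP/eqP; lia.
    * by rewrite rho1 hr.
    * move=> k /eqP hk; apply: val_inj => /=.
      have fk := vfacts hn (inr_ord k). dest fk; lia.
  + rewrite (eq_bigr (fun k : 'I_(m * (n - 1)).+1 =>
        (rho n k.+1 == (rho n i.+1).-1)%:R * (rho n j.+1 == (rho n i.+1).-1)%:R)).
      apply: sum_count => //; first lia.
      move=> k _; congr (_%:R). apply/eqP/eqP; lia.
    move=> k _. case: (boolP (rho n k.+1 == (rho n i.+1).-1)) => hk.
    * have -> : (rho n k.+1 + 1 == rho n i.+1)%N by lia.
      have -> : (k.+1 == 1%N) = false.
        by apply/negP => /eqP e; move: hk; rewrite e rho1; lia.
      rewrite !mul1r. congr (_%:R). apply/eqP/eqP; lia.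
    * have -> : (rho n k.+1 + 1 == rho n i.+1)%N = false by lia.
      by rewrite !mul0r.
Qed.

Lemma Mpow2 (R : nzRingType) m n : (3 <= n)%N ->
  dw_adj R m n ^+ (n - 1 + 1 + (n - 1)) = m%:R *: dw_adj R m n ^+ (n - 1).
Proof.
move=> hn; rewrite !exprD expr1 -mulrA.
apply/matrixP => i j. by rewrite (EME R hn) [in RHS]mxE.
Qed.

Lemma dz_pow (T : nzRingType) (A X : T) k : A ^+ k.+1 * X = A ^+ k ->
  forall j, A ^+ (j + k).+1 * X = A ^+ (j + k).
Proof. by move=> h j; rewrite -addnS exprD -mulrA h -exprD. Qed.

Lemma dz_X (T : nzRingType) (A X : T) : X * A * X = X -> A * X = X * A ->
  forall j, X = A ^+ j * X ^+ j.+1.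
Proof.
move=> h1 h2; elim=> [|j IH]; first by rewrite expr0 mul1r expr1.
have e : A * X ^+ j.+2 = X ^+ j.+1.
  by rewrite !exprS !mulrA h2 h1 -exprS.
by rewrite exprSr -mulrA e.
Qed.

Lemma dz_uniq (T : nzRingType) (A X Y : T) :
  is_drazin_inverse A X -> is_drazin_inverse A Y -> X * Y = Y * X -> X = Y.
Proof.
move=> [kx [hx1 hx2 hx3]] [ky [hy1 hy2 hy3]] hxy.
set k := (kx + ky)%N.
have hX : A ^+ k.+1 * X = A ^+ k by rewrite /k addnC; exact: dz_pow.
have hY : A ^+ k.+1 * Y = A ^+ k by exact: dz_pow.
have cX : GRing.comm X (A ^+ k.+1) by apply: commrX; rewrite /GRing.comm.
have cY : GRing.comm Y (A ^+ k.+1) by apply: commrX; rewrite /GRing.comm.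
have e1 : X = Y * A * X.
  rewrite {1}(dz_X hx2 hx3 k) -hY -cY -mulrA exprS -!mulrA.
  by rewrite -(dz_X hx2 hx3 k).
have e2 : Y = X * A * Y.
  rewrite {1}(dz_X hy2 hy3 k) -hX -cX -mulrA exprS -!mulrA.
  by rewrite -(dz_X hy2 hy3 k).
by rewrite e1 -hy3 -mulrA -hxy mulrA hx3 -e2.
Qed.

Unset Implicit Arguments.

Theorem theorem3p3 (R : realFieldType) (m n : nat) :
  (2 <= m)%N -> (3 <= n)%N ->
  let M := dw_adj R m n in
  let MD := (m%:R)^-1 *: M ^+ (n - 1) in
  [/\ (forall X, is_drazin_inverse M X <-> X = MD),
      (forall i j, MD i j != 0 -> MD i j = (m%:R)^-1),
      (forall i j, MD i j != 0 <-> dw_pos m n i.+1 j.+1)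
    & (forall i j : 'I_((m * (n - 1)).+1), dw_pos m n i.+1 j.+1 <-> dw_walk m n (n - 1) i.+1 j.+1)].
Proof.
move=> hm hn M MD.
have hm0 : (m%:R : R) != 0 by rewrite pnatr_eq0 -lt0n; apply: leq_trans hm.
have P2 := Mpow2 R m hn. rewrite -/M in P2.
have ee : ((n - 1).+1 + (n - 1) = n - 1 + 1 + (n - 1))%N by rewrite addn1.
have hMD : is_drazin_inverse M MD.
  exists (n - 1)%N; split.
  - by rewrite /MD -scalerAr -exprD ee P2 scalerA mulVf // scale1r.
  - rewrite /MD -!scalerAl -scalerAr -exprSr -exprD ee P2 !scalerA.
    by rewrite mulfVK.
  - by rewrite /MD -scalerAr -scalerAl -exprS exprSr.
have entry : forall i j, MD i j = (m%:R)^-1 * (Ed n i.+1 j.+1)%:R.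
  by move=> i j; rewrite /MD mxE (Epow R hn).
split.
- move=> X; split; last by move=> ->.
  move=> hX. apply: (dz_uniq hX hMD).
  case: hX => k [_ _ h3].
  have cX : GRing.comm X (M ^+ (n - 1)) by apply: commrX; rewrite /GRing.comm.
  by rewrite /MD -scalerAr -scalerAl cX.
- move=> i j; rewrite entry; case: (Ed _ _ _) => //=; first by rewrite mulr1.
  by rewrite mulr0 eqxx.
- move=> i j; rewrite entry (posE hn (inr_ord i) (inr_ord j)).
  rewrite mulf_eq0 invr_eq0 (negbTE hm0) /= pnatr_eq0.
  by case: (Ed _ _ _).
- move=> i j. rewrite (posE hn (inr_ord i) (inr_ord j)) -(EtD hn (inr_ord i) (inr_ord j)).
  rewrite -(walkE hn (leqnn _) (inr_ord i) (inr_ord j)).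
  split.
  + case=> s [h1 h2 h3]; exists s; split => //. exact: inr_ord.
  + case=> s [_ h1 h2 h3]; exists s; split => //.
Qed.
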